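(* Let $f\colon K\to R$ be a right t-unital homomorphism of (nonunital) rings. Then (a) a right $R$-module is t-unital as an $R$-module if and only if it is t-unital as a $K$-module; (b) a left $R$-module is c-unital as an $R$-module if and only if it is c-unital as a $K$-module.
   Context: Rings are associative, not necessarily unital; modules are not assumed unital; $R$-modules are regarded as $K$-modules via $f$. A right module $N$ over a ring $S$ is t-unital if $N\otimes_S S\to N$, $n\otimes s\mapsto ns$, is an isomorphism; a left $S$-module $P$ is c-unital if $P\to\mathrm{Hom}_S(S,P)$, $p\mapsto(s\mapsto sp)$, is an isomorphism. The homomorphism $f$ is right t-unital if $R$, as a right $K$-module via $f$, is t-unital. *)

(* Defs.v *)
From HB Require Import structures.
From mathcomp Require Import all_boot all_algebra.
Set Implicit Arguments. Unset Strict Implicit. Unset Printing Implicit Defensive.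
Import GRing.Theory.
Local Open Scope ring_scope.

Record nuRing := NuRing {
  nur_car :> zmodType;
  nur_mul : nur_car -> nur_car -> nur_car;
  nur_mulA : forall x y z, nur_mul x (nur_mul y z) = nur_mul (nur_mul x y) z;
  nur_mulDl : forall x y z, nur_mul (x + y) z = nur_mul x z + nur_mul y z;
  nur_mulDr : forall x y z, nur_mul x (y + z) = nur_mul x y + nur_mul x z }.
Arguments nur_mul : clear implicits.

Definition is_nuhom (K R : nuRing) (f : K -> R) : Prop :=
  (forall x y, f (x + y) = f x + f y) /\
  (forall x y, f (nur_mul K x y) = nur_mul R (f x) (f y)).

Definition is_additive (M A : zmodType) (g : M -> A) : Prop :=
  forall x y, g (x + y) = g x + g y.

Definition is_rmod (S : nuRing) (N : zmodType) (act : N -> S -> N) : Prop :=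
  [/\ forall n m s, act (n + m) s = act n s + act m s,
      forall n s t, act n (s + t) = act n s + act n t
    & forall n s t, act (act n s) t = act n (nur_mul S s t)].

Definition is_lmod (S : nuRing) (P : zmodType) (act : S -> P -> P) : Prop :=
  [/\ forall s p q, act s (p + q) = act s p + act s q,
      forall s t p, act (s + t) p = act s p + act t p
    & forall s t p, act s (act t p) = act (nur_mul S s t) p].

Definition balanced (S : nuRing) (N : zmodType) (act : N -> S -> N)
    (A : zmodType) (b : N -> S -> A) : Prop :=
  [/\ forall n m s, b (n + m) s = b n s + b m s,
      forall n s t, b n (s + t) = b n s + b n t
    & forall n s t, b (act n s) t = b n (nur_mul S s t)].

(* t-unitality: the canonical map N (x)_S S -> N, n (x) s |-> n s, is an
   isomorphism.  Equivalently (by the defining universal property of the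
   tensor product N (x)_S S), the balanced map (n, s) |-> n s is universal:
   every S-balanced biadditive map b : N x S -> A factors uniquely through
   it via an additive map N -> A. *)
Definition tunital (S : nuRing) (N : zmodType) (act : N -> S -> N) : Prop :=
  forall (A : zmodType) (b : N -> S -> A), balanced act b ->
    exists g : N -> A,
      [/\ is_additive g,
          (forall n s, g (act n s) = b n s)
        & forall g' : N -> A, is_additive g' ->
            (forall n s, g' (act n s) = b n s) -> forall n, g' n = g n].

Definition is_lhom (S : nuRing) (P : zmodType) (act : S -> P -> P)
    (g : S -> P) : Prop :=
  is_additive g /\ forall s t, g (nur_mul S s t) = act s (g t).

(* c-unitality: p |-> (s |-> s p) is a bijection P -> Hom_S(S, P)
   (its values always lie in Hom_S(S,P) for a module P). *)
Definition cunital (S : nuRing) (P : zmodType) (act : S -> P -> P) : Prop :=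
  (forall p q, (forall s, act s p = act s q) -> p = q) /\
  (forall g : S -> P, is_lhom act g -> exists p, forall s, g s = act s p).

(* Main.v *)
Require Import Defs.
From mathcomp Require Import all_boot all_algebra.
From Stdlib Require Import ClassicalEpsilon.
Set Implicit Arguments. Unset Strict Implicit. Unset Printing Implicit Defensive.
Import GRing.Theory.
Local Open Scope ring_scope.

Lemma tvanish (S : nuRing) (N : zmodType) (act : N -> S -> N) :
  tunital act -> forall (A : zmodType) (d : N -> A), is_additive d ->
  (forall n s, d (act n s) = 0) -> forall n, d n = 0.
Proof.
move=> T A d dA dv n.
have bal : balanced act (fun _ _ => (0:A)) by split=> *; rewrite ?addr0.
have [g [gA gE gU]] := T A _ bal.
rewrite (gU d dA dv n).
symmetry; apply: (gU (fun _ => 0)) => //.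
by move=> x y; rewrite addr0.
Qed.

Lemma sub0 (A : zmodType) (x y : A) : x - y = 0 -> x = y.
Proof. by move/eqP; rewrite subr_eq0 => /eqP. Qed.

Section Main.
Variables (K R : nuRing) (f : K -> R).
Hypothesis hf : is_nuhom f.
Hypothesis hR : tunital (fun (r : R) (k : K) => nur_mul R r (f k)).

Lemma a_fwd (N : zmodType) (act : N -> R -> N) : is_rmod act ->
  tunital act -> tunital (fun (n : N) (k : K) => act n (f k)).
Proof.
move=> hN T A b [b1 b2 b3].
case: hf => fD fM; case: hN => a1 a2 a3.
have Hn : forall n, exists h : R -> A, [/\ is_additive h,
   forall r k, h (nur_mul R r (f k)) = b (act n r) k &
   forall h', is_additive h' ->
     (forall r k, h' (nur_mul R r (f k)) = b (act n r) k) -> forall r, h' r = h r].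
  move=> n; apply: hR; split.
  - by move=> r r' k; rewrite a2 b1.
  - by move=> r k k'; rewrite b2.
  - by move=> r k k'; rewrite -a3 b3.
have [h hP] : exists h : N -> R -> A, forall n, [/\ is_additive (h n),
   forall r k, h n (nur_mul R r (f k)) = b (act n r) k &
   forall h', is_additive h' ->
     (forall r k, h' (nur_mul R r (f k)) = b (act n r) k) -> forall r, h' r = h n r].
  exists (fun n => proj1_sig (constructive_indefinite_description _ (Hn n))).
  move=> n; exact: (proj2_sig (constructive_indefinite_description _ (Hn n))).
have Bbal : balanced act h.
  split.
  - move=> n m r; case: (hP (n + m)) => _ _ U.
    case: (hP n) => hnA hnE _; case: (hP m) => hmA hmE _.
    symmetry; apply: (U (fun r => h n r + h m r)).
      by move=> x y; rewrite hnA hmA addrACA.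
    by move=> r' k; rewrite hnE hmE a1 b1.
  - by move=> n s t; case: (hP n).
  - move=> n s t; case: (hP (act n s)) => _ _ U; case: (hP n) => hnA hnE _.
    symmetry; apply: (U (fun t => h n (nur_mul R s t))).
      by move=> x y; rewrite nur_mulDr hnA.
    by move=> r k; rewrite nur_mulA hnE a3.
have [g [gA gE gU]] := T A _ Bbal.
exists g; split => //.
- move=> n k; apply: sub0.
  apply: (tvanish T (d := fun m => g (act m (f k)) - b m k)) => //.
    by move=> x y; rewrite a1 gA b1 opprD addrACA.
  move=> m r; rewrite a3 gE.
  by case: (hP m) => _ -> _; rewrite subrr.
- move=> g' g'A g'E; apply: gU => // n r.
  case: (hP n) => _ _ U; apply: (U (fun r => g' (act n r))).
    by move=> x y; rewrite a2 g'A.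
  by move=> r' k; rewrite -a3 g'E.
Qed.

Lemma a_bwd (N : zmodType) (act : N -> R -> N) : is_rmod act ->
  tunital (fun (n : N) (k : K) => act n (f k)) -> tunital act.
Proof.
move=> hN T A b [b1 b2 b3].
case: hf => fD fM; case: hN => a1 a2 a3.
have balK : balanced (fun n k => act n (f k)) (fun n k => b n (f k)).
  split.
  - by move=> *; rewrite b1.
  - by move=> *; rewrite fD b2.
  - by move=> *; rewrite b3 fM.
have [g [gA gE gU]] := T A _ balK.
exists g; split => //.
- move=> n r; apply: sub0.
  apply: (tvanish hR (d := fun r => g (act n r) - b n r)) => //.
    by move=> x y; rewrite a2 gA b2 opprD addrACA.
  by move=> r' k; rewrite -a3 gE b3 subrr.
- by move=> g' g'A g'E; apply: gU => // n k; exact: g'E.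
Qed.

Lemma b_fwd (P : zmodType) (act : R -> P -> P) : is_lmod act ->
  cunital act -> cunital (fun (k : K) (p : P) => act (f k) p).
Proof.
move=> hP [inj surj].
case: hf => fD fM; case: hP => l1 l2 l3.
split.
- move=> p q H; apply: inj => r; apply: sub0.
  apply: (tvanish hR (d := fun r => act r p - act r q)).
    by move=> x y; rewrite !l2 opprD addrACA.
  by move=> s k; rewrite -!l3 H subrr.
- move=> g [gA gM].
  have bal : balanced (fun r k => nur_mul R r (f k)) (fun r k => act r (g k)).
    split.
    - by move=> *; rewrite l2.
    - by move=> r s t /=; rewrite gA l1.
    - by move=> *; rewrite gM l3.
  have [G [GA GE GU]] := hR bal.
  have GL : forall s t, G (nur_mul R s t) = act s (G t).
    move=> s t; apply: sub0.
    apply: (tvanish hR (d := fun t => G (nur_mul R s t) - act s (G t))).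
      by move=> x y; rewrite /= nur_mulDr !GA l1 opprD addrACA.
    by move=> r k; rewrite nur_mulA !GE l3 subrr.
  have [p Hp] := surj G (conj GA GL).
  exists p => k; rewrite -Hp.
  by apply: inj => r; rewrite -GL GE.
Qed.

Lemma b_bwd (P : zmodType) (act : R -> P -> P) : is_lmod act ->
  cunital (fun (k : K) (p : P) => act (f k) p) -> cunital act.
Proof.
move=> hP [inj surj].
case: hf => fD fM; case: hP => l1 l2 l3.
split.
- by move=> p q H; apply: inj => k; exact: H.
- move=> G [GA GL].
  have gl : is_lhom (fun k p => act (f k) p) (fun k => G (f k)).
    split.
    - by move=> x y; rewrite fD GA.
    - by move=> s t; rewrite fM GL.
  have [p Hp] := surj _ gl.
  exists p => r; apply: sub0.
  apply: (tvanish hR (d := fun r => G r - act r p)).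
    by move=> x y; rewrite GA l2 opprD addrACA.
  by move=> s k; rewrite GL Hp l3 subrr.
Qed.

End Main.

Theorem corollary9p7 (K R : nuRing) (f : K -> R) :
  is_nuhom f ->
  (* f is right t-unital: R is t-unital as a right K-module via f *)
  tunital (fun (r : R) (k : K) => nur_mul R r (f k)) ->
  (forall (N : zmodType) (act : N -> R -> N), is_rmod act ->
     tunital act <-> tunital (fun (n : N) (k : K) => act n (f k))) /\
  (forall (P : zmodType) (act : R -> P -> P), is_lmod act ->
     cunital act <-> cunital (fun (k : K) (p : P) => act (f k) p)).
Proof.
move=> hf hR; split.
- move=> N act hN; split; [exact: a_fwd | exact: a_bwd].
- move=> P act hP; split; [exact: b_fwd | exact: b_bwd].
Qed.
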